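(* Let $G$ be a graph with vertex set $[n]$ and fix a threshold $r\ge2$. Let $\mathcal{D}_0$ be any probability distribution over subsets of $[n]$ (a randomized rule for choosing seed sets). For $A\sim\mathcal{D}_0$ and each vertex $i$, let $p_i=\Pr[i\in A]$ and $q_i=\Pr[i\in\langle A\rangle]$, and assume $q_i>0$ for every $i$. Then there is a probability distribution $\mathcal{D}$ over contagious sets of $G$ such that for every vertex $i$, $\Pr_{S\sim\mathcal{D}}[i\in S]\le p_i/q_i$. In particular, if each vertex is a seed independently with probability $p$ and each vertex is activated with probability at least $1/C$ ($C>1$), then $m(G,r)\le Cpn$.
   Context: Bootstrap percolation with threshold $r\ge 2$ on a graph $G=(V,E)$: given a set $A_0\subseteq V$ of seeds, define for $i\ge1$ $A_i=A_{i-1}\cup\{v:|N(v)\cap A_{i-1}|\ge r\}$, where $N(v)$ is the set of neighbors of $v$, and $\langle A_0\rangle=\bigcup_i A_i$ (the set of activated vertices). The set $A_0$ is contagious if $\langle A_0\rangle=V$; $m(G,r)$ denotes the minimum cardinality of a contagious set. *)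

(* Defs.v *)
From HB Require Import structures.
From mathcomp Require Import all_boot all_order all_algebra.
Set Implicit Arguments. Unset Strict Implicit. Unset Printing Implicit Defensive.
Import Order.TTheory GRing.Theory Num.Theory.

Section Bootstrap.
Variables (n : nat) (e : rel 'I_n) (r : nat).

Definition nbhd (v : 'I_n) : {set 'I_n} := [set u | e v u].

Definition bp_step (A : {set 'I_n}) : {set 'I_n} :=
  A :|: [set v | r <= #|nbhd v :&: A|].

Definition bp_iter (k : nat) (A : {set 'I_n}) : {set 'I_n} := iter k bp_step A.

(* <A> = \bigcup_i A_i ; the sequence A_i is increasing in the finite set 'I_n,
   so it is stationary from i = n on: the union over i <= n is the full union. *)
Definition bp_closure (A : {set 'I_n}) : {set 'I_n} :=
  \bigcup_(k < n.+1) bp_iter k A.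

Definition contagious (A : {set 'I_n}) : bool := bp_closure A == [set: 'I_n].

(* m(G,r): minimum cardinality of a contagious set ([set: 'I_n] is contagious) *)
Definition m_min : nat :=
  #|[arg min_(A < [set: 'I_n] | contagious A) #|A|]|.

End Bootstrap.

Local Open Scope ring_scope.

Definition is_distr (R : realFieldType) (n : nat) (D : {set 'I_n} -> R) : Prop :=
  (forall A, 0 <= D A) /\ \sum_(A : {set 'I_n}) D A = 1.

Definition prob (R : realFieldType) (n : nat) (D : {set 'I_n} -> R)
  (P : pred {set 'I_n}) : R := \sum_(A : {set 'I_n} | P A) D A.

Definition binom_distr (R : realFieldType) (n : nat) (p : R) (A : {set 'I_n}) : R :=
  p ^+ #|A| * (1 - p) ^+ (n - #|A|).

(* Main.v *)
Require Import Defs.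
From HB Require Import structures.
From mathcomp Require Import all_boot all_order all_algebra.
Import Order.TTheory GRing.Theory Num.Theory.

Section Cl.
Variables (n : nat) (e : rel 'I_n) (r : nat).
Local Notation cl := (bp_closure e r).
Local Notation st := (bp_step e r).
Local Notation it k A := (bp_iter e r k A).
Implicit Types A B : {set 'I_n}.

Lemma st_ext A : A \subset st A.
Proof. exact: subsetUl. Qed.

Lemma st_mono A B : A \subset B -> st A \subset st B.
Proof.
move=> AB; rewrite /bp_step; apply: setUSS => //.
apply/subsetP => v; rewrite !inE => H; apply: leq_trans H _.
by apply: subset_leq_card; apply: setIS.
Qed.

Lemma it_mono k A B : A \subset B -> it k A \subset it k B.
Proof. by move=> AB; elim: k => //= k IH; apply: st_mono. Qed.

Lemma it_incr k m A : (k <= m)%N -> it k A \subset it m A.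
Proof.
move/subnK <-; elim: (m - k)%N => [|d IH] //=.
apply: subset_trans IH _; apply: st_ext.
Qed.

Lemma it_cases A k : (k <= #|it k A|)%N \/ it k A = it k.+1 A.
Proof.
elim: k => [|k [IH|IH]]; first by left.
- case: (eqVneq (it k.+1 A) (it k.+2 A)) => [->|ne]; first by right.
  left; case: (eqVneq (it k A) (it k.+1 A)) => [E|ne2].
    have h : it k.+2 A = it k.+1 A.
      by change (st (it k.+1 A) = st (it k A)); rewrite -E.
    by rewrite h eqxx in ne.
  apply: leq_ltn_trans IH _; apply: proper_card; rewrite properEneq ne2 /=.
  exact: st_ext.
- by right; change (st (it k A) = st (it k.+1 A)); rewrite -IH.
Qed.

Lemma it_fix A : st (it n A) = it n A.
Proof.
case: (it_cases A n) => [H|H]; last exact: (esym H).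
have -> : it n A = setT.
  apply/eqP; rewrite eqEcard subsetT cardsT card_ord; exact: H.
by apply/eqP; rewrite eqEsubset subsetT st_ext.
Qed.

Lemma cl_it A : cl A = it n A.
Proof.
apply/eqP; rewrite eqEsubset; apply/andP; split.
  by apply/bigcupsP => k _; apply: it_incr; rewrite -ltnS.
by apply: (bigcup_sup (@ord_max n)).
Qed.

Lemma cl_ext A : A \subset cl A.
Proof. rewrite cl_it. exact: (it_incr 0 n A (leq0n n)). Qed.

Lemma cl_mono A B : A \subset B -> cl A \subset cl B.
Proof. by rewrite !cl_it; apply: it_mono. Qed.

Lemma cl_idem A : cl (cl A) = cl A.
Proof.
have gen : forall k X, st X = X -> it k X = X.
  by elim => // k IH X h /=; rewrite IH.
by rewrite (cl_it (cl A)) cl_it gen // it_fix.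
Qed.
End Cl.
Arguments cl_ext {n e r}.
Arguments cl_mono {n e r A B}.
Arguments cl_idem {n e r}.

From mathcomp Require Import ring zify.
Local Open Scope ring_scope.

Set Implicit Arguments. Unset Strict Implicit.
Section Push.
Variables (R : realFieldType) (n : nat) (X : finType) (W : X -> R)
  (f : X -> {set 'I_n}).

Definition push (S : {set 'I_n}) : R := \sum_x (if f x == S then W x else 0).

Lemma push_prob (P : pred {set 'I_n}) :
  prob push P = \sum_x (if P (f x) then W x else 0).
Proof.
rewrite /prob /push exchange_big /=; apply: eq_bigr => x _.
rewrite -big_mkcondr /=; case: ifP => Pf.
  rewrite (big_pred1 (f x)) // => S /=.
  by case: (eqVneq S (f x)) => [->|ne]; [rewrite Pf | rewrite ?andbF].
rewrite big_pred0 // => S /=.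
by case: (eqVneq S (f x)) => [->|ne]; [rewrite Pf | rewrite ?andbF].
Qed.

Lemma push_sum : \sum_S push S = \sum_x W x.
Proof.
have := push_prob xpredT; rewrite /prob => ->; by apply: eq_bigr.
Qed.

Lemma push_ge0 : (forall x, 0 <= W x) -> forall S, 0 <= push S.
Proof. by move=> H S; apply: sumr_ge0 => x _; case: ifP. Qed.

Lemma push_supp S : push S != 0 -> exists x, f x = S /\ W x != 0.
Proof.
case: (pickP (fun x => (f x == S) && (W x != 0))) => [x /andP[/eqP ? ?]|H].
  by move=> _; exists x.
rewrite /push big1 ?eqxx // => x _; case: ifP => // fS.
by have := H x; rewrite /= fS /= => /negbFE/eqP.
Qed.
End Push.

Lemma prob_le (R : realFieldType) n (D : {set 'I_n} -> R) (P Q : pred {set 'I_n}) :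
  (forall A, 0 <= D A) -> (forall A, P A -> Q A) -> prob D P <= prob D Q.
Proof.
move=> D0 PQ; rewrite /prob [X in X <= _]big_mkcond [X in _ <= X]big_mkcond.
apply: ler_sum => A _; case: ifP => PA; first by rewrite (PQ A PA).
by case: ifP.
Qed.

Section Main.
Variables (R : realFieldType) (n : nat) (e : rel 'I_n) (r : nat)
  (D0 : {set 'I_n} -> R).
Local Notation cl := (bp_closure e r).
Implicit Types A U S : {set 'I_n}.

Definition piU U := prob D0 (fun A => ~~ (cl A \subset U)).
Definition wU U A : R := if ~~ (cl A \subset U) then D0 A / piU U else 0.

Fixpoint Df k U : {set 'I_n} -> R :=
  match k with
  | 0 => fun S => (S == set0)%:R
  | k'.+1 => if U == setT then fun S => (S == set0)%:R
      else push (fun x : {set 'I_n} * {set 'I_n} => wU U x.1 * Df k' (U :|: cl x.1) x.2)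
                (fun x => (x.1 :\: U) :|: x.2)
  end.

Definition Pinv U (D : {set 'I_n} -> R) :=
  [/\ forall S, 0 <= D S, \sum_S D S = 1,
      forall S, D S != 0 -> cl (U :|: S) = setT /\ (forall i, i \in S -> i \notin U)
    & forall i, i \notin U -> prob D (fun S => i \in S) <=
          prob D0 (fun A => i \in A) / prob D0 (fun A => i \in cl A)].

Lemma clT : cl setT = setT.
Proof. by apply/eqP; rewrite eqEsubset subsetT cl_ext. Qed.

Lemma point_ok U : U = setT -> Pinv U (fun S => (S == set0)%:R).
Proof.
move=> ->; split.
- by move=> S; rewrite ler0n.
- rewrite (bigD1 set0) //= eqxx big1 ?addr0 //.
  by move=> S /negbTE ->.
- move=> S0 H; have E : S0 = set0.
    by apply/eqP; move: H; case: (S0 == set0) => //; rewrite eqxx.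
  by rewrite E setU0 clT; split => // i; rewrite inE.
- by move=> i; rewrite inE.
Qed.

Lemma sum_wU U (P : pred {set 'I_n}) :
  \sum_A wU U A * (P A)%:R = (\sum_(A | ~~ (cl A \subset U) && P A) D0 A) / piU U.
Proof.
rewrite [in RHS]big_mkcond /= mulr_suml; apply: eq_bigr => A _; rewrite /wU.
by case: (~~ _); case: (P A); rewrite /= ?mulr1 ?mulr0 ?mul0r.
Qed.

Lemma Df_ok (D0ge0 : forall A, 0 <= D0 A) (D0sum : \sum_A D0 A = 1)
  (qpos : forall i, 0 < prob D0 (fun A => i \in cl A)) :
  forall k U, (#|~: U| <= k)%N -> Pinv U (Df k U).
Proof.
elim=> [|k IH] U hU /=.
  apply: point_ok; apply/eqP; rewrite -subTset; apply/subsetP => i _.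
  apply: contraT => iU; have : (0 < #|~: U|)%N by apply/card_gt0P; exists i; rewrite inE.
  by rewrite lt0n; move: hU; rewrite leqn0 => ->.
case: ifP => [/eqP UT|UT]; first exact: point_ok.
have [i0 i0U] : exists i0, i0 \notin U.
  case: (pickP (fun i => i \notin U)) => [i0 h|h]; first by exists i0.
  move: UT; suff -> : U = setT by rewrite eqxx.
  by apply/setP => i; rewrite inE; have := h i => /= /negbFE.
have pipos : 0 < piU U.
  apply: lt_le_trans (qpos i0) _; apply: prob_le => // A h.
  by apply/negP => /subsetP s; move: (s _ h); rewrite (negbTE i0U).
have wge0 A : 0 <= wU U A.
  by rewrite /wU; case: ifP => // _; apply: divr_ge0 => //; exact: ltW.
have IH' A : ~~ (cl A \subset U) -> Pinv (U :|: cl A) (Df k (U :|: cl A)).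
  move=> h; apply: IH; rewrite -ltnS; apply: leq_trans hU; apply: proper_card.
  by rewrite properC; exact: properUl.
have Wge0 (x : {set 'I_n} * {set 'I_n}) : 0 <= wU U x.1 * Df k (U :|: cl x.1) x.2.
  rewrite /wU; case: ifP => h; last by rewrite mul0r.
  apply: mulr_ge0; first exact: divr_ge0 (D0ge0 _) (ltW pipos).
  by case: (IH' _ h).
split.
- exact: push_ge0.
- rewrite push_sum -(pair_bigA _ (fun A S' => wU U A * Df k (U :|: cl A) S')) /=.
  transitivity (\sum_A wU U A).
    apply: eq_bigr => A _; rewrite -mulr_sumr /wU; case: ifP => h; last by rewrite mul0r.
    by case: (IH' _ h) => _ -> _ _; rewrite mulr1.
  rewrite /wU -big_mkcond /= -mulr_suml.
  have -> : \sum_(A | ~~ (cl A \subset U)) D0 A = piU U by [].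
  by rewrite divff // lt0r_neq0.
- move=> S /push_supp [[A S'] [/= <- Wne]].
  have h : ~~ (cl A \subset U).
    by move: Wne; rewrite /wU; case: ifP => // _; rewrite mul0r eqxx.
  have Dne : Df k (U :|: cl A) S' != 0.
    by move: Wne; apply: contraNneq => ->; rewrite mulr0.
  case: (IH' _ h) => _ _ /(_ _ Dne) [clT' disj] _.
  split.
  + set Y := U :|: ((A :\: U) :|: S').
    have AY : A \subset Y.
      by apply/subsetP => x xA; rewrite !inE xA; case: (x \in U).
    apply/eqP; rewrite eqEsubset subsetT /= -clT' -(cl_idem Y).
    apply: cl_mono; apply/subsetP => x; rewrite inE => /orP[/setUP[xU|xclA]|xS'].
    * by apply: (subsetP (cl_ext Y)); rewrite !inE xU.
    * by apply: (subsetP (cl_mono AY)).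
    * by apply: (subsetP (cl_ext Y)); rewrite !inE xS' !orbT.
  + move=> x; rewrite !inE => /orP[/andP[xU _]//|xS'].
    by move: (disj x xS'); rewrite inE negb_or => /andP[].
- move=> i iU.
  set c := prob D0 (fun A => i \in A) / prob D0 (fun A => i \in cl A).
  have c0 : 0 <= c.
    by apply: divr_ge0; [apply: sumr_ge0 => A _; exact: D0ge0 | exact: ltW].
  rewrite push_prob -(pair_bigA _ (fun A S' => if i \in (A :\: U) :|: S' then wU U A * Df k (U :|: cl A) S' else 0)) /=.
  apply: le_trans (_ : _ <= \sum_A wU U A * ((i \in A)%:R + (i \notin cl A)%:R * c)) _.
    apply: ler_sum => A _.
    case: (boolP (~~ (cl A \subset U))) => h; last first.
      rewrite /wU (negbTE h) mul0r big1 // => S' _; rewrite mul0r; by case: ifP.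
    have -> : \sum_S' (if i \in (A :\: U) :|: S' then wU U A * Df k (U :|: cl A) S' else 0)
        = wU U A * \sum_S' (if i \in (A :\: U) :|: S' then Df k (U :|: cl A) S' else 0).
      by rewrite mulr_sumr; apply: eq_bigr => S' _; case: ifP => _; rewrite ?mulr0.
    apply: ler_wpM2l => //.
    case: (IH' _ h) => Dge0 Dsum Dsupp Dbound.
    case: (boolP (i \in A)) => iA.
      apply: le_trans (_ : _ <= 1) _.
        rewrite -Dsum; apply: ler_sum => S' _; case: ifP => // _; exact: Dge0.
      by rewrite /= mulr1n lerDl; apply: mulr_ge0.
    under eq_bigr => S' _ do rewrite !inE (negbTE iA) andbF /=.
    rewrite -big_mkcond /=.
    case: (boolP (i \in cl A)) => iclA /=.
      rewrite mulr0n mul0r addr0 big1 // => S' iS'; apply/eqP.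
      apply: contraTT iS' => /Dsupp [_ /(_ i)] H; apply/negP => /H.
      by rewrite inE iclA orbT.
    rewrite mulr0n mulr1n mul1r add0r; apply: Dbound.
    by rewrite inE negb_or iU iclA.
  rewrite (eq_bigr (fun A => wU U A * (i \in A)%:R + wU U A * (i \notin cl A)%:R * c)); last first.
    by move=> A _; rewrite mulrDr mulrA.
  rewrite big_split -mulr_suml /=.
  have E1 : \sum_A wU U A * (i \in A)%:R = prob D0 (fun A => i \in A) / piU U.
    rewrite sum_wU; congr (_ / _); apply: eq_bigl => A /=.
    case iA: (i \in A); rewrite ?andbF ?andbT //.
    apply/negP => /subsetP s; have := s i (subsetP (cl_ext A) i iA).
    by rewrite (negbTE iU).
  have E2 : \sum_A wU U A * (i \notin cl A)%:R
      = (piU U - prob D0 (fun A => i \in cl A)) / piU U.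
    rewrite sum_wU; congr (_ / _).
    rewrite /piU /prob [in RHS](bigID (fun A => i \in cl A)) /=.
    have -> : \sum_(A | ~~ (cl A \subset U) && (i \in cl A)) D0 A
        = \sum_(A | i \in cl A) D0 A.
      apply: eq_bigl => A /=; case iA: (i \in cl A); rewrite ?andbF ?andbT //.
      by apply/negP => /subsetP s; have := s i iA; rewrite (negbTE iU).
    by rewrite addrAC subrr add0r.
  rewrite E1 E2 /c.
  have pn := lt0r_neq0 pipos; have qn := lt0r_neq0 (qpos i).
  rewrite le_eqVlt; apply/orP; left; apply/eqP; field.
  by rewrite pn qn.
Qed.
End Main.

Lemma part1 (R : realFieldType) (n : nat) (e : rel 'I_n) (r : nat) :
  (forall D0 : {set 'I_n} -> R,
     is_distr D0 ->
     (forall i : 'I_n, 0 < prob D0 (fun A => i \in bp_closure e r A)) ->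
     exists D : {set 'I_n} -> R,
       [/\ is_distr D,
           (forall S, D S != 0 -> contagious e r S) &
           (forall i : 'I_n,
              prob D (fun S => i \in S) <=
              prob D0 (fun A => i \in A) / prob D0 (fun A => i \in bp_closure e r A))]).
Proof.
move=> D0 [D0ge0 D0sum] qpos.
have := @Df_ok R n e r D0 D0ge0 D0sum qpos n set0.
rewrite setC0 cardsT card_ord leqnn => /(_ isT) [Dge0 Dsum Dsupp Dbound].
exists (Df e r D0 n set0); split.
- by split.
- by move=> S /Dsupp [h _]; rewrite /contagious -h set0U.
- by move=> i; apply: Dbound; rewrite inE.
Qed.

Lemma binom_prod (R : realFieldType) n (p : R) (A : {set 'I_n}) :
  binom_distr p A = \prod_i (if i \in A then p else 1 - p).
Proof.
rewrite /binom_distr (bigID (fun i => i \in A)) /=.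
rewrite (eq_bigr (fun=> p)); last by move=> i ->.
rewrite [X in _ = _ * X](eq_bigr (fun=> 1 - p)); last by move=> i /negbTE ->.
rewrite prodr_const.
rewrite (eq_bigl (fun i => i \in ~: A)); last by move=> i; rewrite inE.
rewrite prodr_const; congr (_ * _ ^+ _).
have h := cardsC A; rewrite card_ord in h; apply/eqP; rewrite -(eqn_add2l #|A|) h subnKC //.
by apply: leq_trans (max_card _) _; rewrite card_ord.
Qed.

Lemma binom_sum (R : realFieldType) n (p : R) :
  \sum_(A : {set 'I_n}) binom_distr p A = 1.
Proof.
under eq_bigr do rewrite binom_prod.
rewrite -(bigA_distr (1 : R) +%R (fun=> p) (fun=> 1 - p)).
by rewrite big1 // => i _; change (p + (1 - p) = 1); rewrite addrCA subrr addr0.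
Qed.

Lemma binom_marg (R : realFieldType) n (p : R) (i0 : 'I_n) :
  prob (@binom_distr R n p) (fun A => i0 \in A) = p.
Proof.
rewrite /prob big_mkcond /=.
rewrite (eq_bigr (fun A : {set 'I_n} => \prod_i (if i \in A then (fun=> p) i
   else (fun i => if i == i0 then 0 else 1 - p) i))); last first.
  move=> A _; case: (boolP (i0 \in A)) => h.
    rewrite binom_prod; apply: eq_bigr => i _; case: ifP => //.
    by case: eqP => // -> ; rewrite h.
  by rewrite (bigD1 i0) //= (negbTE h) eqxx mul0r.
rewrite -(bigA_distr (1 : R) +%R) (bigD1 i0) //= eqxx addr0 big1 ?mulr1 // => i /negbTE ->.
by rewrite addrCA subrr addr0.
Qed.

Lemma sum_card (R : realFieldType) n (D : {set 'I_n} -> R) :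
  \sum_S D S * #|S|%:R = \sum_i prob D (fun S => i \in S).
Proof.
under eq_bigr do rewrite -sum1_card natr_sum mulr_sumr big_mkcond /=.
rewrite exchange_big /=; apply: eq_bigr => i _.
by rewrite /prob [RHS]big_mkcond /=; apply: eq_bigr => S _; case: ifP; rewrite ?mulr1.
Qed.

Theorem lemma2 (R : realFieldType) (n : nat) (e : rel 'I_n) (r : nat) :
  symmetric e -> irreflexive e -> (2 <= r)%N ->
  (forall D0 : {set 'I_n} -> R,
     is_distr D0 ->
     (forall i : 'I_n, 0 < prob D0 (fun A => i \in bp_closure e r A)) ->
     exists D : {set 'I_n} -> R,
       [/\ is_distr D,
           (forall S, D S != 0 -> contagious e r S) &
           (forall i : 'I_n,
              prob D (fun S => i \in S) <=
              prob D0 (fun A => i \in A) / prob D0 (fun A => i \in bp_closure e r A))])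
  /\
  (forall p C : R, 0 <= p <= 1 -> 1 < C ->
     (forall i : 'I_n,
        C^-1 <= prob (@binom_distr R n p) (fun A => i \in bp_closure e r A)) ->
     (m_min e r)%:R <= C * p * n%:R).
Proof.
move=> _ _ _; split; first exact: part1.
move=> p C /andP[p0 p1] C1 hq.
have C0 : 0 < C by apply: lt_trans C1.
have Ci0 : 0 < C^-1 by rewrite invr_gt0.
have qpos i : 0 < prob (@binom_distr R n p) (fun A => i \in bp_closure e r A).
  exact: lt_le_trans Ci0 (hq i).
have dist : is_distr (@binom_distr R n p).
  split; last exact: binom_sum.
  by move=> A; apply: mulr_ge0; apply: exprn_ge0; rewrite ?subr_ge0.
have [D [[Dge0 Dsum] Dsupp Dbound]] := part1 dist qpos.
set E := \sum_S D S * #|S|%:R.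
have EB : E <= C * p * n%:R.
  rewrite /E sum_card; apply: le_trans (_ : _ <= \sum_(i : 'I_n) p * C) _.
    apply: ler_sum => i _; apply: le_trans (Dbound i) _.
    rewrite binom_marg; apply: ler_wpM2l => //.
    by rewrite -[X in _ <= X]invrK lef_pV2 ?hq // posrE ?qpos ?invr_gt0.
  by rewrite sumr_const card_ord mulr_natr [p * C]mulrC.
have [S [DS SE]] : exists S, D S != 0 /\ #|S|%:R <= E.
  case: (pickP (fun S => (D S != 0) && (#|S|%:R <= E))) => [S /andP[h1 h2]|none].
    by exists S.
  have [S1 DS1] : exists S1, D S1 != 0.
    case: (pickP (fun S => D S != 0)) => [S1 h|h]; first by exists S1.
    move: Dsum; rewrite big1 => [|S _]; last by apply/eqP; have := h S => /negbFE.
    by move/eqP; rewrite eq_sym oner_eq0.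
  have pos S : 0 <= D S * (#|S|%:R - E).
    case: (eqVneq (D S) 0) => [->|h]; first by rewrite mul0r.
    apply: mulr_ge0 => //; rewrite subr_ge0 ltW //.
    by have := none S; rewrite /= h /= => /negbT; rewrite -ltNge.
  have : 0 < \sum_S D S * (#|S|%:R - E).
    rewrite (bigD1 S1) //=; apply: lt_le_trans (_ : 0 < D S1 * (#|S1|%:R - E) + 0) _.
      rewrite addr0; apply: mulr_gt0; first by rewrite lt_def DS1 Dge0.
      rewrite subr_gt0; have := none S1; rewrite /= DS1 /= => /negbT; by rewrite -ltNge.
    by rewrite lerD2l; apply: sumr_ge0.
  under eq_bigr do rewrite mulrBr.
  by rewrite sumrB -/E -mulr_suml Dsum mul1r subrr ltxx.
apply: le_trans EB; apply: le_trans SE.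
rewrite ler_nat /m_min; case: arg_minnP.
  by rewrite /contagious clT.
move=> A _ minA; exact: minA (Dsupp S DS).
Qed.
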